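(* Let $E$ be a Hausdorff locally convex topological vector space and let $C$ be a set of real-valued functions on $E$, each Gateaux differentiable at $\hat{x}$, with $\hat{x}\in[C]^\times$, such that $\overline{\operatorname{conv}}^{w^*}\{d_G\phi(\hat{x}):\phi\in C\}$ is $w^*$-compact in $E^*$. Then $\mathcal{T}_C(\hat{x})\neq\emptyset$ if and only if $\inf_{\xi\in C}\xi(\hat{x})=0$. In particular, $\mathcal{T}_C(\hat{x})\neq\emptyset$ whenever $\hat{x}\in F\setminus\operatorname{int}(F)$, where $F$ is a nonempty subset of $E$ that is weak-admissible at $\hat{x}$ and determined by $C$.
   Context: $E^*$ carries the weak-star topology; $\overline{\operatorname{conv}}^{w^*}$ is the $w^*$-closed convex hull. Gateaux differentiability of $\phi$ at $x$: there is $d_G\phi(x)\in E^*$ with $\lim_{t\searrow0}(\phi(x+tv)-\phi(x))/t=\langle d_G\phi(x),v\rangle$ for all $v$. $[C]^\times:=\{x\in E:\phi(x)\ge0\ \forall\phi\in C\}$. $\mathcal{T}_C(\hat x):=\bigcap_{n\ge1}\overline{\operatorname{conv}}^{w^*}\{d_G\phi(\hat x):\phi\in C,\ \phi(\hat x)\in[0,1/n]\}$. $C$ is equi-Gateaux differentiable at $x$ if for every $v$, $\lim_{t\searrow0}\sup_{\phi\in C}|(\phi(x+tv)-\phi(x)-t\langle d_G\phi(x),v\rangle)/t|=0$; equi-lower semicontinuous at $x$ if for every $\varepsilon>0$ some open neighbourhood $O$ of $x$ satisfies $\phi(y)-\phi(x)>-\varepsilon$ for all $y\in O,\phi\in C$.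 $F$ is weak-admissible at $\hat x\in F$, determined by a nonempty family $C$, if: (a) $F=[C]^\times$; (b) $C$ is equi-Gateaux differentiable at $\hat x$; (c) $\{\phi\in C:\phi(\hat x)\ne0\}$ is empty or equi-lower semicontinuous at $\hat x$; (d) $\overline{\operatorname{conv}}^{w^*}\{d_G\phi(\hat x):\phi\in C\}$ is $w^*$-compact. *)

(* Defs.v *)
From HB Require Import structures.
From mathcomp Require Import all_boot all_order all_algebra.
From mathcomp Require Import all_classical all_reals all_analysis.

Set Implicit Arguments.
Unset Strict Implicit.
Unset Printing Implicit Defensive.

Import Order.TTheory GRing.Theory Num.Theory.
Import numFieldTopology.Exports.

Local Open Scope classical_set_scope.
Local Open Scope ring_scope.

Section Defs.
Variables (R : realType) (E : tvsType R).

(* The weak-star topology on E^star is the topology of pointwise convergence;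
   we view functionals as elements of the pointwise (product) topology on
   E -> R, and E^star as a subset of it. *)
Definition fnl := {ptws E -> R}.

Definition dual : set fnl :=
  [set f : fnl | (forall (a : R) (x y : E), f (a *: x + y) = a * f x + f y)
                 /\ continuous (f : E -> R)].

Definition convex_fnl (B : set fnl) : Prop :=
  forall (f g : fnl) (t : R), B f -> B g -> 0 <= t <= 1 ->
    B ((fun x : E => t * f x + (1 - t) * g x) : fnl).

Definition wstar_closed (B : set fnl) : Prop :=
  B `<=` dual /\ exists K : set fnl, closed K /\ B = K `&` dual.

Definition wstar_clconv (A : set fnl) : set fnl :=
  \bigcap_(B in [set B : set fnl | A `<=` B /\ convex_fnl B /\ wstar_closed B]) B.

(* w*-compact subset of E^star (compactness in the subspace topology of E^star
   coincides with compactness in the ambient pointwise topology) *)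
Definition wstar_compact (K : set fnl) : Prop := K `<=` dual /\ compact K.

Definition gateaux_at (phi : E -> R) (x : E) (d : fnl) : Prop :=
  d \in dual /\
  forall v : E, (fun t : R => (phi (x + t *: v) - phi x) / t) @ 0^'+ --> d v.

Definition nonneg_set (C : set (E -> R)) : set E :=
  [set x | forall phi, C phi -> 0 <= phi x].

(* T_C(xhat), where dG phi stands for d_G phi (xhat) *)
Definition tangent_cone (C : set (E -> R)) (dG : (E -> R) -> fnl) (xh : E)
  : set fnl :=
  \bigcap_(n in [set n : nat | (1 <= n)%N])
     wstar_clconv [set dG phi | phi in
        [set phi | C phi /\ 0 <= phi xh <= n%:R^-1]].

Definition equi_gateaux (C : set (E -> R)) (dG : (E -> R) -> fnl) (x : E) :=
  forall v : E,
    (fun t : R => ereal_sup [set (`| (phi (x + t *: v) - phi x - t * dG phi v) / t |)%:E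
                             | phi in C]) @ 0^'+ --> 0%E.

Definition equi_lsc (C : set (E -> R)) (x : E) :=
  forall eps : R, 0 < eps -> exists O : set E, open O /\ O x /\
    forall y phi, O y -> C phi -> phi y - phi x > - eps.

Definition weak_admissible (F : set E) (C : set (E -> R))
  (dG : (E -> R) -> fnl) (xh : E) : Prop :=
  C !=set0 /\ F xh /\
  F = nonneg_set C /\
  equi_gateaux C dG xh /\
  ([set phi | C phi /\ phi xh != 0] = set0 \/
     equi_lsc [set phi | C phi /\ phi xh != 0] xh) /\
  wstar_compact (wstar_clconv (dG @` C)).
End Defs.

(* Main.v *)
Require Import Defs.
From HB Require Import structures.
From mathcomp Require Import all_boot all_order all_algebra.
From mathcomp Require Import all_classical all_reals all_analysis.
From mathcomp Require Import lra.
Import Order.TTheory GRing.Theory Num.Theory.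
Import numFieldTopology.Exports.
Local Open Scope classical_set_scope.
Local Open Scope ring_scope.

Section Helpers.
Variables (R : realType) (E : tvsType R).

Lemma clconv_sub (A : set (fnl E)) : A `<=` wstar_clconv A.
Proof. by move=> a Aa B [AB _]; exact: AB. Qed.

Lemma clconv_mono (A A' : set (fnl E)) :
  A `<=` A' -> wstar_clconv A `<=` wstar_clconv A'.
Proof.
move=> AA' f Hf B [A'B [cB wB]]; apply: Hf; split => //.
exact: (subset_trans AA' A'B).
Qed.

Lemma clconv_ne (A : set (fnl E)) : wstar_clconv A !=set0 -> A !=set0.
Proof.
move=> [f Hf]; apply/set0P/negP => /eqP A0.
have : (set0 : set (fnl E)) f; last by [].
apply: Hf; split; first by rewrite A0.
split; first by [].
split; first by [].
by exists set0; split; [exact: closed0 | rewrite set0I].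
Qed.

Lemma clconv_closure (K0 A : set (fnl E)) (g : fnl E) :
  K0 `<=` @dual R E -> K0 g -> closure (wstar_clconv A) g -> wstar_clconv A g.
Proof.
move=> K0d K0g cg B HB; have [AB [cB [Bd [K [cK BK]]]]] := HB.
rewrite BK; split; last exact: K0d.
have : closure (wstar_clconv A) `<=` closure K.
  apply: closureS; move=> f Hf.
  have : B f := Hf B HB.
  by rewrite BK => -[].
move=> /(_ g cg).
by rewrite -(closure_id K).1.
Qed.

Lemma inf0 (C : set (E -> R)) (xh : E) :
  (forall phi, C phi -> 0 <= phi xh) ->
  (forall e, 0 < e -> exists2 phi, C phi & phi xh <= e) ->
  ereal_inf [set (phi xh)%:E | phi in C] = 0%E.
Proof.
move=> nn H; apply/eqP; rewrite eq_le; apply/andP; split.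
  apply/lee_addgt0Pr => e e0; rewrite add0e.
  apply: ge_ereal_inf; have [phi Cphi le] := H e e0.
  by exists (phi xh)%:E; [exists phi | rewrite lee_fin].
apply: le_ereal_inf_tmp => _ [phi Cphi <-]; rewrite lee_fin; exact: nn.
Qed.

End Helpers.
Arguments clconv_sub {R E A} [_].
Arguments clconv_mono {R E A A'}.
Arguments clconv_ne {R E A}.
Arguments clconv_closure {R E K0 A g}.
Arguments inf0 {R E C xh}.

Theorem proposition3p10 (R : realType) (E : tvsType R)
  (C : set (E -> R)) (dG : (E -> R) -> fnl E) (xh : E) :
  hausdorff_space E ->
  (forall phi, C phi -> gateaux_at phi xh (dG phi)) ->
  (nonneg_set C xh ->
   wstar_compact (wstar_clconv (dG @` C)) ->
   (tangent_cone C dG xh !=set0 <->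
     ereal_inf [set (phi xh)%:E | phi in C] = 0%E))
  /\ (forall F : set E, F !=set0 -> weak_admissible F C dG xh ->
        F xh -> ~ interior F xh -> tangent_cone C dG xh !=set0).
Proof.
move=> _ _.
have part1 : nonneg_set C xh ->
   wstar_compact (wstar_clconv (dG @` C)) ->
   (tangent_cone C dG xh !=set0 <->
     ereal_inf [set (phi xh)%:E | phi in C] = 0%E).
  move=> nn [K0d K0c].
  pose A := fun n : nat => [set dG phi | phi in
     [set phi | C phi /\ 0 <= phi xh <= n%:R^-1]].
  have AsubC : forall n, A n `<=` dG @` C.
    by move=> n _ [phi [Cphi _] <-]; exists phi.
  split.
    move=> [g Hg]; apply: inf0 => //.
    move=> e e0; pose n := (Num.truncn e^-1).+1.
    have Hgn : wstar_clconv (A n) g := Hg n (ltn0Sn _).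
    have ne : exists x, wstar_clconv (A n) x by exists g.
    have [_ [phi [Cphi /andP[_ le]] _]] := clconv_ne ne.
    exists phi => //; apply: (le_trans le); apply: ltW.
    rewrite -[e in _ < e]invrK ltf_pV2 ?posrE ?invr_gt0 ?ltr0Sn //.
    exact: truncnS_gt.
  move=> Hinf.
  have An : forall n, (1 <= n)%N -> A n !=set0.
    move=> n n1.
    have : (ereal_inf [set (phi xh)%:E | phi in C] < (n%:R^-1)%:E)%E.
      by rewrite Hinf lte_fin invr_gt0 ltr0n.
    move/ereal_inf_lt => [_ [phi Cphi <-]]; rewrite lte_fin => lt.
    exists (dG phi), phi => //; split => //; apply/andP; split.
      exact: nn.
    exact: ltW.
  have Amono : forall m n, (1 <= n)%N -> (n <= m)%N -> A m `<=` A n.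
    move=> m n n1 nm _ [phi [Cphi /andP[p0 pm]] <-]; exists phi => //.
    split => //; apply/andP; split => //; apply: (le_trans pm).
    rewrite lef_pV2 ?posrE ?ltr0n ?ler_nat //.
    exact: (leq_trans n1 nm).
  pose f := fun n : nat =>
    wstar_clconv (dG @` C) `&` closure (wstar_clconv (A n)).
  have finIf : finI [set n : nat | (1 <= n)%N] f.
    move=> D' D'sub.
    pose m := maxn 1 (\max_(i <- finmap.enum_fset D') i).
    have [f0 Af] := An m (leq_maxl _ _).
    exists f0 => i Di; split.
      exact: clconv_sub (AsubC m _ Af).
    apply: subset_closure; apply: clconv_sub; apply: (Amono m i _ _ _ Af).
      by move: (D'sub i Di); rewrite inE.
    apply: (leq_trans _ (leq_maxr _ _)).
    exact: (leq_bigmax_seq (F := id) i Di).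
  have [|p [K0p clp]] := K0c _ (finI_filter finIf).
    by exists (f 1%N); [apply: finI_from1 | move=> ? []].
  exists p => n n1; apply: (clconv_closure K0d K0p).
  have : closed (closure (wstar_clconv (A n))) by exact: closed_closure.
  apply => B Bp.
  have Ff : filter_from (finI_from [set n : nat | (1 <= n)%N] f) id (f n).
    by exists (f n); [apply: finI_from1 | ].
  have [q [[_ q1] q2]] := clp _ _ Ff Bp.
  by exists q.
split => //.
move=> F _ [CnE [_ [FE [_ [H5 Hcomp]]]]] Fxh Nint.
have nn : nonneg_set C xh by rewrite -FE.
apply/(part1 nn Hcomp).
case: (pselect (forall e, 0 < e -> exists2 phi, C phi & phi xh <= e)) => [H|H].
  exact: inf0.
exfalso.
have [c [c0 Hc]] : exists c, 0 < c /\ forall phi, C phi -> c < phi xh.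
  apply: contra_notP H => H e e0.
  apply: contra_notP H => H; exists e; split => // phi Cphi.
  rewrite ltNge; apply/negP => le; apply: H; by exists phi.
have SC : [set phi | C phi /\ phi xh != 0] = C.
  apply/seteqP; split => phi; first by case.
  move=> Cphi; split => //; rewrite gt_eqF //; exact: lt_trans c0 (Hc _ Cphi).
rewrite SC in H5; case: H5 => [C0|lsc].
  by move: CnE; rewrite C0 => -[].
have [U [oU [Uxh HU]]] := lsc c c0.
apply: Nint; apply: (filterS (P := U)).
  move=> y Uy; rewrite FE => phi Cphi.
  have := HU y phi Uy Cphi; have := Hc phi Cphi; lra.
exact: open_nbhs_nbhs.
Qed.
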